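(* For a triplet $P=(T,I,F)$ of nonempty intervals contained in $[0,1]$, with $T^L=\inf T$, $T^U=\sup T$ and similarly $I^L,I^U,F^L,F^U$, define Zhang's interval functions $$s^{Z}(P)=[T^L+2-I^U-F^U,\ T^U+2-I^L-F^L],$$ $$a^{Z}(P)=[\min\{T^L-F^L,T^U-F^U\},\ \max\{T^L-F^L,T^U-F^U\}],\qquad c^{Z}(P)=[T^L,T^U],$$ and the real-valued functions $$s(P)=\frac{4+T^L+T^U-I^L-I^U-F^L-F^U}{6},\quad a(P)=\frac{T^L+T^U-F^L-F^U}{2},\quad c(P)=\frac{T^L+T^U}{2}.$$ Rank intervals by their midpoints (a ranking equivalent to Xu and Da's possibility-degree ranking). Then for any two such triplets $P_1,P_2$ and each pair $(f^{Z},f)\in\{(s^Z,s),(a^Z,a),(c^Z,c)\}$: the midpoint of $f^Z(P_1)$ is greater than, less than, or equal to the midpoint of $f^Z(P_2)$ if and only if $f(P_1)$ is respectively greater than, less than, or equal to $f(P_2)$. Consequently, ranking interval neutrosophic triplets lexicographically by $(s^Z,a^Z,c^Z)$ (with intervals compared via midpoints) gives the same result as ranking them lexicographically by $(s,a,c)$.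
   Context: $s^Z,a^Z,c^Z$ are the interval neutrosophic score, accuracy and certainty functions of Hong-yu Zhang, Jian-qiang Wang and Xiao-hong Chen; $s,a,c$ are the paper's new interval neutrosophic score, accuracy and certainty functions. The midpoint of an interval with endpoints $u\le v$ is $(u+v)/2$. *)

(* Defs.v *)
From HB Require Import structures.
From mathcomp Require Import all_boot all_order all_algebra.
Set Implicit Arguments. Unset Strict Implicit. Unset Printing Implicit Defensive.
Import Order.TTheory GRing.Theory Num.Theory.
Local Open Scope ring_scope.

(* An interval is given by its endpoints (inf, sup) = (L, U). *)
Definition ivl (R : realFieldType) := (R * R)%type.

Definition ivl01 (R : realFieldType) (x : ivl R) : Prop :=
  0 <= x.1 /\ x.1 <= x.2 /\ x.2 <= 1.

Definition mid (R : realFieldType) (x : ivl R) : R := (x.1 + x.2) / 2.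

Record INT (R : realFieldType) := MkINT { Tm : ivl R; Im : ivl R; Fm : ivl R }.

Definition validINT (R : realFieldType) (P : INT R) : Prop :=
  ivl01 (Tm P) /\ ivl01 (Im P) /\ ivl01 (Fm P).

Definition sZ (R : realFieldType) (P : INT R) : ivl R :=
  ((Tm P).1 + 2 - (Im P).2 - (Fm P).2, (Tm P).2 + 2 - (Im P).1 - (Fm P).1).
Definition aZ (R : realFieldType) (P : INT R) : ivl R :=
  (Num.min ((Tm P).1 - (Fm P).1) ((Tm P).2 - (Fm P).2),
   Num.max ((Tm P).1 - (Fm P).1) ((Tm P).2 - (Fm P).2)).
Definition cZ (R : realFieldType) (P : INT R) : ivl R :=
  ((Tm P).1, (Tm P).2).

Definition sN (R : realFieldType) (P : INT R) : R :=
  (4 + (Tm P).1 + (Tm P).2 - (Im P).1 - (Im P).2 - (Fm P).1 - (Fm P).2) / 6.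
Definition aN (R : realFieldType) (P : INT R) : R :=
  ((Tm P).1 + (Tm P).2 - (Fm P).1 - (Fm P).2) / 2.
Definition cN (R : realFieldType) (P : INT R) : R :=
  ((Tm P).1 + (Tm P).2) / 2.

Definition same_rank (R : realFieldType) (x1 x2 y1 y2 : R) : Prop :=
  (x1 > x2 <-> y1 > y2) /\ (x1 < x2 <-> y1 < y2) /\ (x1 = x2 <-> y1 = y2).

Definition lexlt3 (R : realFieldType) (x y : R * R * R) : Prop :=
  x.1.1 < y.1.1 \/
  (x.1.1 = y.1.1 /\ (x.1.2 < y.1.2 \/ (x.1.2 = y.1.2 /\ x.2 < y.2))).

Definition keyZ (R : realFieldType) (P : INT R) : R * R * R :=
  (mid (sZ P), mid (aZ P), mid (cZ P)).
Definition keyN (R : realFieldType) (P : INT R) : R * R * R :=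
  (sN P, aN P, cN P).

(* Main.v *)
Require Import Defs.
From HB Require Import structures.
From mathcomp Require Import all_boot all_order all_algebra.
From mathcomp Require Import ring lra.
Import Order.TTheory GRing.Theory Num.Theory.
Local Open Scope ring_scope.

Lemma midsZ (R : realFieldType) (P : INT R) : mid (sZ P) = 3 * sN P.
Proof. by rewrite /mid /sZ /sN /=; field. Qed.

Lemma minmaxD (R : realFieldType) (a b : R) : Num.min a b + Num.max a b = a + b.
Proof. by case: (leP a b) => _ //; rewrite addrC. Qed.

Lemma midaZ (R : realFieldType) (P : INT R) : mid (aZ P) = aN P.
Proof. by rewrite /mid /aZ /aN /= minmaxD; field. Qed.

Lemma midcZ (R : realFieldType) (P : INT R) : mid (cZ P) = cN P.
Proof. by []. Qed.

Lemma keyZE (R : realFieldType) (P : INT R) :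
  keyZ P = (3 * sN P, aN P, cN P).
Proof. by rewrite /keyZ midsZ midaZ midcZ. Qed.

Lemma three_lt (R : realFieldType) (x y : R) : (3 * x < 3 * y) = (x < y).
Proof. by rewrite ltr_pM2l. Qed.

Lemma three_eq (R : realFieldType) (x y : R) : (3 * x = 3 * y) <-> (x = y).
Proof. split => H; [lra | by rewrite H]. Qed.

Theorem theorem10p5 (R : realFieldType) (P1 P2 : INT R) :
  validINT P1 -> validINT P2 ->
  (same_rank (mid (sZ P1)) (mid (sZ P2)) (sN P1) (sN P2) /\
   same_rank (mid (aZ P1)) (mid (aZ P2)) (aN P1) (aN P2) /\
   same_rank (mid (cZ P1)) (mid (cZ P2)) (cN P1) (cN P2)) /\
  [/\ (lexlt3 (keyZ P1) (keyZ P2) <-> lexlt3 (keyN P1) (keyN P2)),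
      (lexlt3 (keyZ P2) (keyZ P1) <-> lexlt3 (keyN P2) (keyN P1)) &
      (keyZ P1 = keyZ P2 <-> keyN P1 = keyN P2)].
Proof.
move=> _ _.
rewrite !keyZE !midsZ !midaZ !midcZ /same_rank /lexlt3 /keyN /= !three_lt.
move: (@three_eq R (sN P1) (sN P2)) (@three_eq R (sN P2) (sN P1)) => E1 E2.
split; first by do !split => //; move/E1.
split.
- by split; case=> [|[/E1 ? ?]]; auto; case=> [|[? ?]]; auto; right; split => //; apply/E1.
- by split; case=> [|[/E2 ? ?]]; auto; case=> [|[? ?]]; auto; right; split => //; apply/E2.
- split; [case=> /E1 -> -> -> // | case=> -> -> ->] => //.
Qed.
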